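(* Work in dimension $d=2$. Let $\tau=(V,E)$ be a rooted tree and $\sigma$ a bijection of $V$ such that $\sigma.\tau$ is a rooted tree and $F(\tau)=F(\sigma.\tau)$ (as multilinear maps $\mathcal{C}_2^{V}\to\mathcal{C}_2$). Then $\sigma(C_v)=C_v$ for every $v\in V$; consequently $E_\sigma=E$. In particular $F(\sigma.\tau)=F(\tau)$ if and only if $\sigma.\tau=\tau$.
   Context: A rooted tree on a finite vertex set $V\subset\mathbb{N}$ is a set $E$ of ordered pairs of elements of $V$ (an edge $(v,w)$ means $w$ is a child of $v$) such that exactly one vertex $r$ (the root) has no parent, every other vertex has exactly one parent, and every vertex is connected to the root by following parents. $C_v=\{w:(v,w)\in E\}$; $\tau_v$ is the subtree of $v$ and its descendants. For a bijection $\sigma$ of $V$, set $E_\sigma=\{(v,\sigma(w)):(v,w)\in E\}$ and $\sigma.\tau=(V,E_\sigma)$ (each vertex other than $\sigma(r)$ has exactly one parent; it is a rooted tree when it is weakly connected). Note this is not the usual relabelling action. Let $\mathcal{C}_d=C^\infty(\mathbb{R}^d,\mathbb{R}^d)$, $g_j$ the $j$-th coordinate, $\partial_j=\partial/\partial x_j$. For $\tau$ with root $r$ whose children are $v_1,\dots,v_k$, define recursively $F(\tau)((f^i)_{i\in V})=\sum_{j_1,\dots,j_k=1}^d F(\tau_{v_1})((f^i)_{i\in V(\tau_{v_1})})_{j_1}\cdots F(\tau_{v_k})((f^i)_{i\in V(\tau_{v_k})})_{j_k}\,\partial_{j_1}\cdots\partial_{j_k}f^r$ (for a single vertex $F(\tau)=f^r$).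 *)

(* Defs.v *)
From Stdlib Require Import Reals List Arith Relations.
From Coquelicot Require Import Coquelicot.
Import ListNotations.
Open Scope R_scope.

(* A point of R^2 and a vector field R^2 -> R^2. Coordinate 0 is [fst],
   every other index denotes coordinate 1 ([snd]). *)
Definition VF := (R * R)%type -> (R * R)%type.

Definition coord (j : nat) (x : R * R) : R := if Nat.eqb j 0 then fst x else snd x.
Definition upd (j : nat) (x : R * R) (t : R) : R * R :=
  if Nat.eqb j 0 then (t, snd x) else (fst x, t).

Definition pder (j : nat) (h : R * R -> R) (x : R * R) : R :=
  Derive (fun t => h (upd j x t)) (coord j x).

Fixpoint iterp (js : list nat) (h : R * R -> R) : R * R -> R :=
  match js with
  | [] => h
  | j :: js' => pder j (iterp js' h)
  end.

Definition smooth_scalar (h : R * R -> R) : Prop :=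
  forall js : list nat,
    (forall (j : nat) (x : R * R), (j < 2)%nat ->
        ex_derive (fun t => iterp js h (upd j x t)) (coord j x)) /\
    (forall x : R * R, continuous (iterp js h) x).

Definition smooth_vf (g : VF) : Prop :=
  smooth_scalar (fun x => fst (g x)) /\ smooth_scalar (fun x => snd (g x)).

Definition pderV (j : nat) (g : VF) : VF :=
  fun x => (pder j (fun y => fst (g y)) x, pder j (fun y => snd (g y)) x).

(* V and E are finite sets, represented by duplicate-free lists. *)
Definition children (E : list (nat * nat)) (v : nat) : list nat :=
  map snd (filter (fun e => Nat.eqb (fst e) v) E).

Definition rooted_at (V : list nat) (E : list (nat * nat)) (r : nat) : Prop :=
  NoDup V /\ NoDup E /\
  (forall v w, In (v, w) E -> In v V /\ In w V) /\
  In r V /\ (forall v, ~ In (v, r) E) /\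
  (forall u, In u V -> (forall v, ~ In (v, u) E) -> u = r) /\
  (forall w, In w V -> w <> r -> exists! v, In (v, w) E) /\
  (forall w, In w V -> clos_refl_trans nat (fun a b => In (b, a) E) w r).

Definition is_rooted_tree (V : list nat) (E : list (nat * nat)) : Prop :=
  exists r, rooted_at V E r.

Definition tree_root (V : list nat) (E : list (nat * nat)) : nat :=
  match find (fun v => negb (existsb (fun e => Nat.eqb (snd e) v) E)) V with
  | Some r => r
  | None => 0%nat
  end.

Definition bij_on (V : list nat) (s : nat -> nat) : Prop :=
  (forall v, In v V -> In (s v) V) /\
  (forall v w, In v V -> In w V -> s v = s w -> v = w) /\
  (forall w, In w V -> exists v, In v V /\ s v = w).

Definition act (s : nat -> nat) (E : list (nat * nat)) : list (nat * nat) :=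
  map (fun e => (fst e, s (snd e))) E.

(* G ks g = sum_{j_1..j_k} ks_1(x)_{j_1} ... ks_k(x)_{j_k} d_{j_1}...d_{j_k} g *)
Fixpoint Gop (ks : list VF) (g : VF) : VF :=
  match ks with
  | [] => g
  | k :: ks' => fun x =>
      let a := Gop ks' (pderV 0 g) x in
      let b := Gop ks' (pderV 1 g) x in
      (fst (k x) * fst a + snd (k x) * fst b,
       fst (k x) * snd a + snd (k x) * snd b)
  end.

(* F(tau_v), computed with fuel n (n >= height suffices) *)
Fixpoint Fv (n : nat) (E : list (nat * nat)) (f : nat -> VF) (v : nat) : VF :=
  match n with
  | O => f v
  | S n' => Gop (map (Fv n' E f) (children E v)) (f v)
  end.

Definition Ftree (V : list nat) (E : list (nat * nat)) (f : nat -> VF) : VF :=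
  Fv (length V) E f (tree_root V E).

Definition F_eq (V : list nat) (E E' : list (nat * nat)) : Prop :=
  forall f : nat -> VF, (forall i, In i V -> smooth_vf (f i)) ->
    forall x, Ftree V E f x = Ftree V E' f x.

Definition same_set {A : Type} (l1 l2 : list A) : Prop :=
  forall a, In a l1 <-> In a l2.

(* Main.v *)
Require Import Defs.
From Stdlib Require Import Reals List Arith Relations Lia Lra Permutation FunctionalExtensionality Classical.
From Coquelicot Require Import Coquelicot.
Import ListNotations.
Open Scope R_scope.

Definition ms (c : R) (A B : nat) : R * R -> R := fun y => c * fst y ^ A * snd y ^ B.

Lemma is_derive_mon (c K : R) (A : nat) (t : R) :
  is_derive (fun t => c * t ^ A * K) t (c * INR A * t ^ (A - 1) * K).
Proof.
  auto_derive; auto. replace (A - 1)%nat with (Init.Nat.pred A) by lia. ring.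
Qed.

Lemma is_derive_mon2 (c K : R) (B : nat) (t : R) :
  is_derive (fun t => c * K * t ^ B) t (c * K * (INR B * t ^ (B - 1))).
Proof.
  auto_derive; auto. replace (B - 1)%nat with (Init.Nat.pred B) by lia. ring.
Qed.

Lemma pder_ms j c A B : pder j (ms c A B) =
  if Nat.eqb j 0 then ms (c * INR A) (A - 1) B else ms (c * INR B) A (B - 1).
Proof.
  apply functional_extensionality; intros [y1 y2].
  unfold pder, ms, coord, upd. destruct (Nat.eqb j 0); simpl.
  - apply is_derive_unique. apply is_derive_mon.
  - rewrite (is_derive_unique _ _ (c * y1 ^ A * (INR B * y2 ^ (B - 1)))); [ring|apply is_derive_mon2].
Qed.

Lemma ex_derive_ms j c A B x : ex_derive (fun t => ms c A B (upd j x t)) (coord j x).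
Proof.
  destruct x as [y1 y2]. unfold ms, coord, upd. destruct (Nat.eqb j 0); simpl.
  - eexists. apply is_derive_mon.
  - eexists. apply is_derive_mon2.
Qed.

Lemma iterp_ms js c A B : exists c' A' B', iterp js (ms c A B) = ms c' A' B'.
Proof.
  induction js as [|j js IH]; simpl.
  - eauto.
  - destruct IH as (c' & A' & B' & ->). rewrite pder_ms.
    destruct (Nat.eqb j 0); eauto.
Qed.

Lemma cont_pow_fst (A : nat) (x : R * R) : continuous (fun y : R * R => fst y ^ A) x.
Proof.
  destruct x as [a b].
  induction A; simpl.
  - apply continuous_const.
  - apply (continuous_mult (K := R_AbsRing) (fun y : R*R => fst y) (fun y => fst y ^ A)); auto.
    apply continuous_fst.
Qed.

Lemma cont_pow_snd (A : nat) (x : R * R) : continuous (fun y : R * R => snd y ^ A) x.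
Proof.
  destruct x as [a b].
  induction A; simpl.
  - apply continuous_const.
  - apply (continuous_mult (K := R_AbsRing) (fun y : R*R => snd y) (fun y => snd y ^ A)); auto.
    apply continuous_snd.
Qed.

Lemma cont_ms c A B x : continuous (ms c A B) x.
Proof.
  unfold ms.
  apply (continuous_mult (K := R_AbsRing) (fun y : R*R => c * fst y ^ A) (fun y => snd y ^ B)).
  - apply (continuous_mult (K := R_AbsRing) (fun y : R*R => c) (fun y => fst y ^ A)).
    + apply continuous_const.
    + apply cont_pow_fst.
  - apply cont_pow_snd.
Qed.

Lemma smooth_ms c A B : smooth_scalar (ms c A B).
Proof.
  intros js. destruct (iterp_ms js c A B) as (c' & A' & B' & ->).
  split.
  - intros j x _. apply ex_derive_ms.
  - intros x. apply cont_ms.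
Qed.

Definition mvf (c0 c1 : R) (A B : nat) : VF := fun y => (ms c0 A B y, ms c1 A B y).

Lemma smooth_mvf c0 c1 A B : smooth_vf (mvf c0 c1 A B).
Proof. split; apply smooth_ms. Qed.

Lemma pderV_mvf j c0 c1 A B : pderV j (mvf c0 c1 A B) =
  if Nat.eqb j 0 then mvf (c0 * INR A) (c1 * INR A) (A - 1) B
  else mvf (c0 * INR B) (c1 * INR B) A (B - 1).
Proof.
  unfold pderV, mvf. simpl.
  change (fun y => ms c0 A B y) with (ms c0 A B).
  change (fun y => ms c1 A B y) with (ms c1 A B).
  rewrite !pder_ms. destruct (Nat.eqb j 0); reflexivity.
Qed.

Fixpoint gv (vs : list (R * R)) (A B : nat) (x : R * R) : R :=
  match vs with
  | [] => fst x ^ A * snd x ^ B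
  | uv :: r => fst uv * INR A * gv r (A - 1) B x + snd uv * INR B * gv r A (B - 1) x
  end.

Lemma Gop_mvf ks c0 c1 A B x :
  Gop ks (mvf c0 c1 A B) x =
  (c0 * gv (map (fun k => k x) ks) A B x, c1 * gv (map (fun k => k x) ks) A B x).
Proof.
  revert c0 c1 A B. induction ks as [|k ks IH]; intros c0 c1 A B; simpl.
  - unfold mvf, ms. f_equal; ring.
  - rewrite !pderV_mvf. simpl. rewrite !IH. simpl. f_equal; ring.
Qed.
Definition tov (t : bool * R) : R * R := if fst t then (0, snd t) else (snd t, 0).
Definition cntT (ts : list (bool * R)) : nat := length (filter (fun t => fst t) ts).
Definition cntF (ts : list (bool * R)) : nat := length (filter (fun t => negb (fst t)) ts).

Lemma pow0_ne (A : nat) : 0 ^ A <> 0 <-> A = 0%nat.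
Proof.
  split.
  - intros H. destruct A; auto. exfalso; apply H. apply pow_i. lia.
  - intros ->. simpl. lra.
Qed.

Lemma gv0 ts A B :
  gv (map tov ts) A B (0, 0) <> 0 <->
  (A = cntF ts /\ B = cntT ts /\ List.Forall (fun t => snd t <> 0) ts).
Proof.
  revert A B. induction ts as [|[d a] ts IH]; intros A B; simpl.
  - unfold cntF, cntT; simpl. split.
    + intros H. split; [|split].
      * apply pow0_ne. intros H0. apply H. rewrite H0. ring.
      * apply pow0_ne. intros H0. apply H. rewrite H0. ring.
      * constructor.
    + intros (-> & -> & _). simpl. lra.
  - unfold tov at 1; destruct d; simpl; unfold cntF, cntT in *; simpl.
    + replace (0 * INR A * gv (map tov ts) (A - 1) B (0, 0) + a * INR B * gv (map tov ts) A (B - 1) (0, 0))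
        with (a * INR B * gv (map tov ts) A (B - 1) (0, 0)) by ring.
      split.
      * intros H. assert (Ha : a <> 0) by (intros ->; apply H; ring).
        assert (HB : INR B <> 0) by (intros E; apply H; rewrite E; ring).
        assert (Hg : gv (map tov ts) A (B - 1) (0, 0) <> 0) by (intros E; apply H; rewrite E; ring).
        apply IH in Hg. destruct Hg as (H1 & H2 & H3).
        assert (B <> 0%nat) by (intros ->; apply HB; reflexivity).
        split; [auto|split; [lia|constructor; auto]].
      * intros (H1 & H2 & H3). inversion H3 as [|? ? Ha Ht]. simpl in *.
        assert (Hg : gv (map tov ts) A (B - 1) (0, 0) <> 0).
        { apply IH. split; [auto|split; [lia|auto]]. }
        apply Rmult_integral_contrapositive_currified; auto.
        apply Rmult_integral_contrapositive_currified; auto.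
        apply not_0_INR. lia.
    + replace (a * INR A * gv (map tov ts) (A - 1) B (0, 0) + 0 * INR B * gv (map tov ts) A (B - 1) (0, 0))
        with (a * INR A * gv (map tov ts) (A - 1) B (0, 0)) by ring.
      split.
      * intros H. assert (Ha : a <> 0) by (intros ->; apply H; ring).
        assert (HB : INR A <> 0) by (intros E; apply H; rewrite E; ring).
        assert (Hg : gv (map tov ts) (A - 1) B (0, 0) <> 0) by (intros E; apply H; rewrite E; ring).
        apply IH in Hg. destruct Hg as (H1 & H2 & H3).
        assert (A <> 0%nat) by (intros ->; apply HB; reflexivity).
        split; [lia|split; [auto|constructor; auto]].
      * intros (H1 & H2 & H3). inversion H3 as [|? ? Ha Ht]. simpl in *.
        assert (Hg : gv (map tov ts) (A - 1) B (0, 0) <> 0).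
        { apply IH. split; [lia|split; [auto|auto]]. }
        apply Rmult_integral_contrapositive_currified; auto.
        apply Rmult_integral_contrapositive_currified; auto.
        apply not_0_INR. lia.
Qed.

Definition ntw (w : nat) (ch : list nat) : nat := length (filter (fun c => Nat.eqb c w) ch).

Definition tf (E : list (nat * nat)) (p w : nat) (v : nat) : VF :=
  let k := length (children E v) in
  if Nat.eqb v w then mvf 0 1 k 0
  else if Nat.eqb v p then mvf 1 0 (k - 1) 1 else mvf 1 0 k 0.

Definition amp E ET p w n v : R :=
  if Nat.eqb v w then snd (Fv n ET (tf E p w) v (0, 0)) else fst (Fv n ET (tf E p w) v (0, 0)).

Lemma shape E ET p w n v :
  Fv n ET (tf E p w) v (0, 0) = tov (Nat.eqb v w, amp E ET p w n v).
Proof.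
  unfold amp. destruct n as [|n]; simpl.
  - unfold tf. destruct (Nat.eqb v w) eqn:Hw.
    + unfold tov, mvf, ms; simpl. f_equal. ring.
    + destruct (Nat.eqb v p); unfold tov, mvf, ms; simpl; f_equal; ring.
  - unfold tf. destruct (Nat.eqb v w) eqn:Hw.
    + rewrite Gop_mvf. unfold tov; simpl. f_equal. ring.
    + destruct (Nat.eqb v p); rewrite Gop_mvf; unfold tov; simpl; f_equal; ring.
Qed.

Lemma cntT_map w (a : nat -> R) ch : cntT (map (fun c => (Nat.eqb c w, a c)) ch) = ntw w ch.
Proof.
  unfold cntT, ntw. induction ch as [|c ch IH]; simpl; auto.
  destruct (Nat.eqb c w); simpl; auto.
Qed.

Lemma cntF_map w (a : nat -> R) ch :
  cntF (map (fun c => (Nat.eqb c w, a c)) ch) = (length ch - ntw w ch)%nat.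
Proof.
  unfold cntF, ntw. induction ch as [|c ch IH]; cbn [map filter length]; auto.
  assert (length (filter (fun c => Nat.eqb c w) ch) <= length ch)%nat by apply filter_length_le.
  destruct (Nat.eqb c w); cbn [filter negb fst length]; rewrite IH; lia.
Qed.

Definition LC (p w : nat) (ch : list nat) (v : nat) : Prop :=
  ntw w ch = (if Nat.eqb v p then 1 else 0)%nat.

Lemma step E ET p w n v :
  p <> w -> length (children ET v) = length (children E v) ->
  (amp E ET p w (S n) v <> 0 <->
   LC p w (children ET v) v /\ List.Forall (fun c => amp E ET p w n c <> 0) (children ET v)).
Proof.
  intros Hpw Hlen.
  set (ch := children ET v) in *.
  assert (Hmap : map (fun k => k (0, 0)) (map (Fv n ET (tf E p w)) ch) =
                 map tov (map (fun c => (Nat.eqb c w, amp E ET p w n c)) ch)).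
  { rewrite !map_map. apply map_ext. intros c. apply shape. }
  assert (Hf : List.Forall (fun t => snd t <> 0) (map (fun c => (Nat.eqb c w, amp E ET p w n c)) ch)
               <-> List.Forall (fun c => amp E ET p w n c <> 0) ch).
  { rewrite Forall_map. simpl. reflexivity. }
  assert (Hle : (ntw w ch <= length ch)%nat) by apply filter_length_le.
  unfold amp at 1.
  change (Fv (S n) ET (tf E p w) v) with (Gop (map (Fv n ET (tf E p w)) ch) (tf E p w v)).
  unfold LC.
  destruct (Nat.eqb v w) eqn:Hw.
  - apply Nat.eqb_eq in Hw. subst v.
    assert (Hp : Nat.eqb w p = false) by (apply Nat.eqb_neq; auto).
    assert (Ht : tf E p w w = mvf 0 1 (length ch) 0).
    { unfold tf. rewrite Nat.eqb_refl. rewrite Hlen. reflexivity. }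
    rewrite Ht, Hp, Gop_mvf, Hmap. simpl.
    rewrite Rmult_1_l, gv0, cntT_map, cntF_map, Hf. split; intros; intuition lia.
  - destruct (Nat.eqb v p) eqn:Hp.
    + assert (Ht : tf E p w v = mvf 1 0 (length ch - 1) 1).
      { unfold tf. rewrite Hw, Hp. rewrite Hlen. reflexivity. }
      rewrite Ht, Gop_mvf, Hmap. simpl.
      rewrite Rmult_1_l, gv0, cntT_map, cntF_map, Hf. split; intros; intuition lia.
    + assert (Ht : tf E p w v = mvf 1 0 (length ch) 0).
      { unfold tf. rewrite Hw, Hp. rewrite Hlen. reflexivity. }
      rewrite Ht, Gop_mvf, Hmap. simpl.
      rewrite Rmult_1_l, gv0, cntT_map, cntF_map, Hf. split; intros; intuition lia.
Qed.

Lemma fuel0 E ET p w v :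
  p <> w -> length (children ET v) = length (children E v) ->
  amp E ET p w 0 v <> 0 -> children ET v = [] /\ Nat.eqb v p = false.
Proof.
  intros Hpw Hlen H. unfold amp in H. simpl in H. unfold tf in H.
  destruct (Nat.eqb v w) eqn:Hw.
  - apply Nat.eqb_eq in Hw; subst v.
    assert (Hp : Nat.eqb w p = false) by (apply Nat.eqb_neq; auto).
    unfold mvf, ms in H; simpl in H.
    split; auto.
    destruct (children E w) eqn:Hc.
    + destruct (children ET w); simpl in Hlen; [auto|discriminate].
    + exfalso; apply H. simpl. ring.
  - destruct (Nat.eqb v p) eqn:Hp.
    + exfalso; apply H. unfold mvf, ms; simpl. ring.
    + split; auto. unfold mvf, ms in H; simpl in H.
      destruct (children E v) eqn:Hc.
      * destruct (children ET v); simpl in Hlen; [auto|discriminate].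
      * exfalso; apply H. simpl. ring.
Qed.

Definition par (ET : list (nat * nat)) (a b : nat) : Prop := In (b, a) ET.
Definition chain (ET : list (nat * nat)) (n v : nat) : Prop :=
  exists c : nat -> nat, c 0%nat = v /\ forall i, (i < n)%nat -> In (c i, c (S i)) ET.

Lemma in_children ET v c : In c (children ET v) <-> In (v, c) ET.
Proof.
  unfold children. rewrite in_map_iff. split.
  - intros ([a b] & Hb & Hin). simpl in Hb; subst. apply filter_In in Hin.
    destruct Hin as [Hin He]. simpl in He. apply Nat.eqb_eq in He. subst; auto.
  - intros H. exists (v, c). split; auto. apply filter_In. split; auto. simpl. apply Nat.eqb_refl.
Qed.

Lemma chain_cons ET n v c : In (v, c) ET -> chain ET n c -> chain ET (S n) v.
Proof.
  intros He (f & Hf0 & Hf).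
  exists (fun i => match i with 0%nat => v | S i => f i end). split; auto.
  intros [|i] Hi.
  - rewrite Hf0. auto.
  - apply Hf. lia.
Qed.

Lemma desc_inv ET u v :
  clos_refl_trans nat (par ET) u v ->
  u = v \/ exists y, In y (children ET v) /\ clos_refl_trans nat (par ET) u y.
Proof.
  intros H. apply clos_rt_rtn1 in H. destruct H as [|y z Hyz Hxy].
  - auto.
  - right. exists y. split.
    + apply in_children. exact Hyz.
    + apply clos_rtn1_rt. exact Hxy.
Qed.

Lemma Zlem E ET p w :
  p <> w -> (forall v, length (children ET v) = length (children E v)) ->
  forall n v, amp E ET p w n v <> 0 ->
  (forall u, clos_refl_trans nat (par ET) u v -> LC p w (children ET u) u) \/ chain ET n v.
Proof.
  intros Hpw Hlen n. induction n as [|n IH]; intros v H.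
  - left. destruct (fuel0 E ET p w v Hpw (Hlen v) H) as [Hc Hp].
    intros u Hu. apply desc_inv in Hu. destruct Hu as [->|(y & Hy & _)].
    + unfold LC. rewrite Hc, Hp. reflexivity.
    + rewrite Hc in Hy. destruct Hy.
  - apply step in H; auto. destruct H as [HLC HF].
    destruct (classic (exists c, In c (children ET v) /\ chain ET n c)) as [(c & Hc & Hch)|Hno].
    + right. apply (chain_cons _ _ _ c); auto. apply in_children; auto.
    + left. intros u Hu. apply desc_inv in Hu. destruct Hu as [->|(y & Hy & Hu)].
      * exact HLC.
      * rewrite Forall_forall in HF. destruct (IH y (HF y Hy)) as [Hl|Hr].
        -- apply Hl; auto.
        -- exfalso; apply Hno; eauto.
Qed.

Lemma Qlem E ET p w :
  p <> w -> (forall v, length (children ET v) = length (children E v)) ->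
  forall n v, (forall u, clos_refl_trans nat (par ET) u v -> LC p w (children ET u) u) ->
  amp E ET p w n v <> 0 \/ chain ET n v.
Proof.
  intros Hpw Hlen n. induction n as [|n IH]; intros v H.
  - right. exists (fun _ => v). split; auto. intros i Hi; lia.
  - destruct (classic (exists c, In c (children ET v) /\ chain ET n c)) as [(c & Hc & Hch)|Hno].
    + right. apply (chain_cons _ _ _ c); auto. apply in_children; auto.
    + left. apply step; auto. split.
      * apply H. apply rt_refl.
      * apply Forall_forall. intros c Hc.
        destruct (IH c) as [Ha|Hch]; auto.
        -- intros u Hu. apply H. eapply rt_trans; [exact Hu|]. apply rt_step.
           unfold par. apply in_children; auto.
        -- exfalso; apply Hno; eauto.
Qed.

Lemma nochain V ET r : rooted_at V ET r -> forall v, ~ chain ET (length V) v.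
Proof.
  intros (HV & HE & Hin & Hr & Hnr & Hroot & Huniq & Hreach) v (c & Hc0 & Hc).
  set (n := length V) in *.
  assert (Hn : (0 < n)%nat).
  { unfold n. destruct V; [destruct Hr|simpl; lia]. }
  assert (HcV : forall i, (i <= n)%nat -> In (c i) V).
  { intros i Hi. destruct (Nat.eq_dec i n) as [->|Hne].
    - destruct n as [|m]; [lia|]. apply (Hin (c m)). apply Hc. lia.
    - apply (Hin _ (c (S i))). apply Hc. lia. }
  assert (Hnd : ~ NoDup (map c (seq 0 (S n)))).
  { intros Hnd. apply NoDup_incl_length with (l' := V) in Hnd.
    - rewrite length_map, length_seq in Hnd. unfold n in Hnd. lia.
    - intros a Ha. apply in_map_iff in Ha. destruct Ha as (i & <- & Hi).
      apply in_seq in Hi. apply HcV. lia. }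
  assert (Hij : exists i j, (i < j <= n)%nat /\ c i = c j).
  { apply NNPP. intros Hno. apply Hnd. apply FinFun.Injective_map_NoDup_in; [|apply seq_NoDup].
    intros x y Hx Hy Hxy. apply in_seq in Hx, Hy.
    destruct (Nat.lt_total x y) as [Hlt|[Heq|Hgt]]; auto.
    - exfalso. apply Hno. exists x, y. split; [lia|auto].
    - exfalso. apply Hno. exists y, x. split; [lia|auto]. }
  destruct Hij as (i & j & Hij & Hcij).
  set (C := fun a => exists k, (i <= k <= j)%nat /\ c k = a).
  assert (Hpred : forall a, C a -> exists b, C b /\ In (b, a) ET).
  { intros a (k & Hk & <-). destruct (Nat.eq_dec k i) as [->|Hne].
    - exists (c (j - 1)%nat). split.
      + exists (j - 1)%nat. split; [lia|auto].
      + rewrite Hcij. replace j with (S (j - 1)) at 2 by lia. apply Hc. lia.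
    - exists (c (k - 1)%nat). split.
      + exists (k - 1)%nat. split; [lia|auto].
      + replace k with (S (k - 1)) at 2 by lia. apply Hc. lia. }
  assert (Hcl : forall x y, clos_refl_trans nat (par ET) x y -> C x -> C y).
  { intros x y H. induction H as [x y Hxy|x|x y z _ IH1 _ IH2]; auto.
    intros Cx. destruct (Hpred x Cx) as (b & Cb & Hb).
    assert (HxV : In x V) by (apply (Hin b x); auto).
    assert (Hxr : x <> r) by (intros ->; apply (Hnr b); auto).
    destruct (Huniq x HxV Hxr) as (v0 & Hv0 & Hu).
    unfold par in Hxy. rewrite <- (Hu y Hxy). rewrite (Hu b Hb). exact Cb. }
  assert (Ci : C (c i)) by (exists i; split; [lia|auto]).
  assert (Cr : C r).
  { apply (Hcl (c i)); auto. apply Hreach. apply HcV. lia. }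
  destruct (Hpred r Cr) as (b & _ & Hb). apply (Hnr b). exact Hb.
Qed.

Lemma tree_root_eq V ET r : rooted_at V ET r -> tree_root V ET = r.
Proof.
  intros (HV & HE & Hin & Hr & Hnr & Hroot & Huniq & Hreach).
  unfold tree_root.
  destruct (find _ V) eqn:Hf.
  - apply find_some in Hf. destruct Hf as [Hn Hb].
    apply Hroot; auto. intros v Hv.
    apply Bool.negb_true_iff in Hb.
    assert (existsb (fun e => Nat.eqb (snd e) n) ET = true).
    { apply existsb_exists. exists (v, n). split; auto. apply Nat.eqb_refl. }
    congruence.
  - exfalso. pose proof (find_none _ _ Hf r Hr) as H. simpl in H.
    apply Bool.negb_false_iff in H. apply existsb_exists in H.
    destruct H as ([a b] & Hab & Hb). simpl in Hb. apply Nat.eqb_eq in Hb. subst.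
    apply (Hnr a); auto.
Qed.

Lemma ntw_children ET u w :
  ntw w (children ET u) = length (filter (fun e => andb (Nat.eqb (fst e) u) (Nat.eqb (snd e) w)) ET).
Proof.
  unfold ntw, children. induction ET as [|[a b] ET IH]; simpl; auto.
  destruct (Nat.eqb a u); simpl; auto.
  destruct (Nat.eqb b w); simpl; auto.
Qed.

Lemma count1 (L : list (nat * nat)) u w : NoDup L -> In (u, w) L ->
  length (filter (fun e => andb (Nat.eqb (fst e) u) (Nat.eqb (snd e) w)) L) = 1%nat.
Proof.
  induction L as [|[a b] L IH]; intros Hnd Hin; simpl; [destruct Hin|].
  inversion Hnd as [|? ? Hnot Hnd']; subst.
  destruct Hin as [Heq|Hin].
  - inversion Heq; subst. rewrite !Nat.eqb_refl. simpl. f_equal.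
    clear IH Hnd. induction L as [|[a' b'] L IH2]; simpl; auto.
    destruct (Nat.eqb a' u) eqn:H1; destruct (Nat.eqb b' w) eqn:H2; simpl;
      try (apply IH2; [intros Hc; apply Hnot; right; auto|inversion Hnd'; auto]).
    apply Nat.eqb_eq in H1, H2; subst. exfalso; apply Hnot; left; auto.
  - destruct (Nat.eqb a u) eqn:H1; destruct (Nat.eqb b w) eqn:H2; simpl; auto.
    apply Nat.eqb_eq in H1, H2; subst. contradiction.
Qed.

Lemma count0 (L : list (nat * nat)) u w : ~ In (u, w) L ->
  length (filter (fun e => andb (Nat.eqb (fst e) u) (Nat.eqb (snd e) w)) L) = 0%nat.
Proof.
  induction L as [|[a b] L IH]; intros Hin; simpl; auto.
  destruct (Nat.eqb a u) eqn:H1; destruct (Nat.eqb b w) eqn:H2; simpl;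
    try (apply IH; intros Hc; apply Hin; right; auto).
  apply Nat.eqb_eq in H1, H2; subst. exfalso; apply Hin; left; auto.
Qed.

Lemma LC_all V ET r p w : rooted_at V ET r -> In p V ->
  ((forall u, In u V -> LC p w (children ET u) u) <-> In (p, w) ET).
Proof.
  intros Ht Hp. pose proof Ht as (HV & HE & Hin & Hr & Hnr & Hroot & Huniq & Hreach).
  split.
  - intros H. specialize (H p Hp). unfold LC in H. rewrite Nat.eqb_refl in H.
    unfold ntw in H.
    destruct (filter (fun c => Nat.eqb c w) (children ET p)) as [|x l] eqn:Hf; [discriminate|].
    assert (Hx : In x (filter (fun c => Nat.eqb c w) (children ET p))) by (rewrite Hf; left; auto).
    apply filter_In in Hx. destruct Hx as [Hx Hxw]. apply Nat.eqb_eq in Hxw. subst.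
    apply in_children; auto.
  - intros Hpw u Hu. unfold LC. rewrite ntw_children.
    destruct (Nat.eqb u p) eqn:Hup.
    + apply Nat.eqb_eq in Hup; subst. apply count1; auto.
    + apply count0. intros Huw.
      assert (HwV : In w V) by (apply (Hin p w); auto).
      assert (Hwr : w <> r) by (intros ->; apply (Hnr p); auto).
      destruct (Huniq w HwV Hwr) as (v0 & _ & Hv).
      apply Nat.eqb_neq in Hup. apply Hup. rewrite <- (Hv u Huw). apply Hv; auto.
Qed.

Lemma eval V E ET r p w :
  rooted_at V ET r -> (forall v, length (children ET v) = length (children E v)) ->
  p <> w -> In p V ->
  (Ftree V ET (tf E p w) (0, 0) <> (0, 0) <-> In (p, w) ET).
Proof.
  intros Ht Hlen Hpw Hp.
  unfold Ftree. rewrite (tree_root_eq V ET r Ht), shape.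
  assert (Ha : tov (Nat.eqb r w, amp E ET p w (length V) r) <> (0, 0) <->
               amp E ET p w (length V) r <> 0).
  { unfold tov; destruct (Nat.eqb r w); simpl; split; intros H1 H2; apply H1;
      [rewrite H2; auto| inversion H2; auto | rewrite H2; auto | inversion H2; auto]. }
  rewrite Ha, <- (LC_all V ET r p w Ht Hp).
  pose proof Ht as (HV & HE & Hin & Hr & Hnr & Hroot & Huniq & Hreach).
  split.
  - intros H. destruct (Zlem E ET p w Hpw Hlen _ _ H) as [Hl|Hc].
    + intros u Hu. apply Hl. apply Hreach. auto.
    + exfalso. apply (nochain V ET r Ht r Hc).
  - intros H. destruct (Qlem E ET p w Hpw Hlen (length V) r) as [Hl|Hc].
    + intros u Hu. apply H. apply clos_rt_rt1n in Hu. destruct Hu as [|y0 z0 Hy0 _]; auto.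
      apply (Hin y0 u); auto.
    + exact Hl.
    + exfalso. apply (nochain V ET r Ht r Hc).
Qed.

Lemma no_selfloop V ET r p w : rooted_at V ET r -> In (p, w) ET -> p <> w.
Proof.
  intros (HV & HE & Hin & Hr & Hnr & Hroot & Huniq & Hreach) Hpw ->.
  assert (HwV : In w V) by (apply (Hin w w); auto).
  assert (Hwr : w <> r) by (intros ->; apply (Hnr r); auto).
  destruct (Huniq w HwV Hwr) as (v0 & Hv0 & Hu).
  assert (Hcl : forall x y, clos_refl_trans nat (fun a b => In (b, a) ET) x y -> x = w -> y = w).
  { intros x y H. induction H as [x y Hxy|x|x y z _ IH1 _ IH2].
    - intros ->. rewrite <- (Hu y Hxy). apply Hu; auto.
    - auto.
    - intros Hx. apply IH2. apply IH1. exact Hx. }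
  apply Hwr. symmetry. apply (Hcl w r); auto.
Qed.

Lemma smooth_tf E p w i : smooth_vf (tf E p w i).
Proof. unfold tf. destruct (Nat.eqb i w); [|destruct (Nat.eqb i p)]; apply smooth_mvf. Qed.

Lemma incl_edges V E E' r r' :
  rooted_at V E r -> rooted_at V E' r' ->
  (forall v, length (children E' v) = length (children E v)) ->
  F_eq V E E' -> forall e, In e E -> In e E'.
Proof.
  intros Ht Ht' Hlen HF [p w] Hpw.
  assert (Hne : p <> w) by (apply (no_selfloop V E r); auto).
  assert (HpV : In p V) by (destruct Ht as (_ & _ & Hin & _); apply (Hin p w); auto).
  apply (eval V E E' r' p w Ht' Hlen Hne HpV).
  rewrite <- (HF (tf E p w) (fun i _ => smooth_tf E p w i) (0, 0)).
  apply (eval V E E r p w Ht (fun v => eq_refl) Hne HpV). exact Hpw.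
Qed.

Lemma Feq_same V E E' r r' :
  rooted_at V E r -> rooted_at V E' r' ->
  (forall v, length (children E' v) = length (children E v)) ->
  F_eq V E E' -> same_set E' E.
Proof.
  intros Ht Ht' Hlen HF a. split; intros H.
  - assert (HF' : F_eq V E' E) by (intros f Hf x; symmetry; apply HF; auto).
    assert (Hlen' : forall v, length (children E v) = length (children E' v)) by (intros v; symmetry; auto).
    exact (incl_edges V E' E r' r Ht' Ht Hlen' HF' a H).
  - exact (incl_edges V E E' r r' Ht Ht' Hlen HF a H).
Qed.

Lemma schwarz_pder h : smooth_scalar h -> forall x, pder 0 (pder 1 h) x = pder 1 (pder 0 h) x.
Proof.
  intros Hs [a b].
  change (Derive (fun z => Derive (fun t => (fun u v => h (u, v)) z t) b) a =
          Derive (fun z => Derive (fun t => (fun u v => h (u, v)) t z) a) b).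
  apply Schwarz.
  - exists (mkposreal 1 Rlt_0_1). intros u v _ _. split; [|split; [|split]].
    + exact (proj1 (Hs []) 0%nat (u, v) ltac:(lia)).
    + exact (proj1 (Hs []) 1%nat (u, v) ltac:(lia)).
    + exact (proj1 (Hs [1%nat]) 0%nat (u, v) ltac:(lia)).
    + exact (proj1 (Hs [0%nat]) 1%nat (u, v) ltac:(lia)).
  - apply continuity_2d_pt_filterlim.
    eapply filterlim_ext; [|exact (proj2 (Hs [0%nat; 1%nat]) (a, b))].
    intros [u v]. reflexivity.
  - apply continuity_2d_pt_filterlim.
    eapply filterlim_ext; [|exact (proj2 (Hs [1%nat; 0%nat]) (a, b))].
    intros [u v]. reflexivity.
Qed.

Lemma iterp_app js j h : iterp (js ++ [j]) h = iterp js (pder j h).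
Proof. induction js as [|k js IH]; simpl; auto. rewrite IH. reflexivity. Qed.

Lemma smooth_pder j h : smooth_scalar h -> smooth_scalar (pder j h).
Proof. intros Hs js. rewrite <- iterp_app. apply Hs. Qed.

Lemma smooth_pderV j g : smooth_vf g -> smooth_vf (pderV j g).
Proof. intros [H1 H2]. split; apply smooth_pder; auto. Qed.

Lemma pderV_comm g : smooth_vf g -> pderV 0 (pderV 1 g) = pderV 1 (pderV 0 g).
Proof.
  intros [H1 H2]. apply functional_extensionality. intros x. unfold pderV at 1 3. simpl.
  f_equal; apply schwarz_pder; auto.
Qed.

Lemma Gop_perm l l' : Permutation l l' -> forall g, smooth_vf g -> forall x, Gop l g x = Gop l' g x.
Proof.
  intros HP. induction HP as [|k l l' HP IH|k1 k2 l|l l' l'' _ IH1 _ IH2]; intros g Hg x.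
  - reflexivity.
  - simpl. rewrite !IH; auto; apply smooth_pderV; auto.
  - simpl. rewrite (pderV_comm g Hg). f_equal; ring.
  - rewrite IH1, IH2; auto.
Qed.

Lemma perm_filter {A} (f : A -> bool) l l' : Permutation l l' -> Permutation (filter f l) (filter f l').
Proof.
  intros HP. induction HP; simpl.
  - constructor.
  - destruct (f x); auto.
  - destruct (f x); destruct (f y); auto. constructor.
  - eapply perm_trans; eauto.
Qed.

Lemma children_perm E E' v : NoDup E -> NoDup E' -> same_set E E' ->
  Permutation (children E v) (children E' v).
Proof.
  intros H1 H2 H3. unfold children. apply Permutation_map, perm_filter, NoDup_Permutation; auto.
Qed.

Lemma Fv_same V E E' f : NoDup E -> NoDup E' -> same_set E E' ->
  (forall v w, In (v, w) E -> In v V /\ In w V) ->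
  (forall i, In i V -> smooth_vf (f i)) ->
  forall n v, Fv n E f v = Fv n E' f v.
Proof.
  intros H1 H2 H3 Hin Hf n. induction n as [|n IH]; intros v; simpl; auto.
  apply functional_extensionality. intros x.
  rewrite (map_ext _ _ IH).
  pose proof (children_perm E E' v H1 H2 H3) as HP.
  destruct (children E v) as [|c ch] eqn:Hc.
  - apply Permutation_nil in HP. rewrite <- HP. reflexivity.
  - apply Gop_perm.
    + apply Permutation_map. exact HP.
    + apply Hf. assert (Hc' : In c (children E v)) by (rewrite Hc; left; auto).
      apply in_children in Hc'. apply (Hin v c); auto.
Qed.

Lemma root_same V E E' : same_set E E' -> tree_root V E = tree_root V E'.
Proof.
  intros H. unfold tree_root.
  replace (fun v => negb (existsb (fun e => Nat.eqb (snd e) v) E))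
    with (fun v => negb (existsb (fun e => Nat.eqb (snd e) v) E')); auto.
  apply functional_extensionality. intros v. f_equal.
  apply Bool.eq_iff_eq_true. rewrite !existsb_exists.
  split; intros (e & He & Hv); exists e; split; auto; apply H; auto.
Qed.

Lemma children_act s E v : children (act s E) v = map s (children E v).
Proof.
  unfold children, act. induction E as [|[a b] E IH]; simpl; auto.
  destruct (Nat.eqb a v); simpl; rewrite IH; auto.
Qed.

Theorem proposition3p4 (V : list nat) (E : list (nat * nat)) (s : nat -> nat) :
  is_rooted_tree V E -> bij_on V s -> is_rooted_tree V (act s E) ->
  (F_eq V E (act s E) ->
     (forall v, In v V ->
        forall y, (exists w, In w (children E v) /\ s w = y) <-> In y (children E v)) /\
     same_set (act s E) E) /\
  (F_eq V (act s E) E <-> same_set (act s E) E).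
Proof.
  intros [r Ht] _ [r' Ht'].
  assert (Hlen : forall v, length (children (act s E) v) = length (children E v)).
  { intros v. rewrite children_act, length_map. reflexivity. }
  assert (Hch : same_set (act s E) E -> forall v y,
            (exists w, In w (children E v) /\ s w = y) <-> In y (children E v)).
  { intros Hss v y. transitivity (In y (children (act s E) v)).
    - rewrite children_act, in_map_iff. split; intros (w & H1 & H2); exists w; auto.
    - rewrite !in_children. apply Hss. }
  assert (HA : F_eq V E (act s E) -> same_set (act s E) E).
  { intros HF. apply (Feq_same V E (act s E) r r'); auto. }
  split.
  - intros HF. split; [|apply HA; auto]. intros v _. apply Hch. apply HA; auto.
  - split.
    + intros HF. apply HA. intros f Hf x. symmetry. apply HF; auto.
    + intros Hss f Hf x. unfold Ftree.
      pose proof Ht as (_ & HE & _ & _). pose proof Ht' as (_ & HE' & Hin' & _).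
      rewrite (root_same V (act s E) E Hss).
      rewrite (Fv_same V (act s E) E f HE' HE Hss Hin' Hf). reflexivity.
Qed.
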